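(* Let $X_1,X_2$ be Polish spaces, $\mu_1\in\mathcal P(X_1)$, $\mu_2\in\mathcal P^n(X_2)$ for some $n\in\mathbb N$, and $\pi\in\Pi(\mu_1,\mu_2)$. Then for $1<q\le 2$, $$D_q(\pi,\mu_1\otimes\mu_2)\le\phi_q(n)=\frac{n^{q-1}-1}{q-1}.$$
   Context: $\mathcal P^n(X)$ denotes the set of probability measures on $X$ supported on at most $n$ points; $\Pi(\mu_1,\mu_2)$ the set of couplings. The Tsallis relative entropy is $D_q(\mu,\nu)=\frac{1}{q-1}\int\big[(\frac{d\mu}{d\nu})^q-\frac{d\mu}{d\nu}\big]\,d\nu$ if $\mu\ll\nu$ and $q>1$, $+\infty$ otherwise; $\phi_q(x)=\frac{x^{q-1}-1}{q-1}$ for $q>1$. *)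

(* Defs.v *)
From HB Require Import structures.
From mathcomp Require Import all_boot all_order all_algebra.
From mathcomp Require Import all_classical all_reals all_analysis.
Set Implicit Arguments.
Unset Strict Implicit.
Unset Printing Implicit Defensive.
Import Order.TTheory GRing.Theory Num.Theory.
Import numFieldNormedType.Exports.
Local Open Scope classical_set_scope.
Local Open Scope ring_scope.
Local Open Scope charge_scope.

Section polish.
Context (R : realType) (T : Type).

Definition is_metric (dist : T -> T -> R) : Prop :=
  [/\ (forall x y, dist x y = 0 <-> x = y),
      (forall x y, dist x y = dist y x) &
      (forall x y z, dist x z <= dist x y + dist y z)].

Definition metric_open (dist : T -> T -> R) (U : set T) : Prop :=
  forall x, U x -> exists2 e : R, 0 < e & forall y, dist x y < e -> U y.

Definition metric_complete (dist : T -> T -> R) : Prop :=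
  forall u : nat -> T,
    (forall e : R, 0 < e -> exists N : nat, forall m n : nat,
        (N <= m)%N -> (N <= n)%N -> dist (u m) (u n) < e) ->
    exists l : T, forall e : R, 0 < e ->
        exists N : nat, forall n : nat, (N <= n)%N -> dist (u n) l < e.

Definition metric_separable (dist : T -> T -> R) : Prop :=
  exists2 D : set T, countable D &
    forall x (e : R), 0 < e -> exists2 y, D y & dist x y < e.
End polish.

Definition polish_measurable (R : realType) d (T : measurableType d) : Prop :=
  exists dist : T -> T -> R,
    [/\ is_metric dist, metric_complete dist, metric_separable dist &
        (@measurable d T) = <<s metric_open dist >>].

(* mu is a convex combination of n Dirac masses (points may repeat and weights
   may vanish, so this is "supported on at most n points"). *)
Definition supported_on_at_most (R : realType) d (T : measurableType d) (n : nat)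
  (mu : probability T R) : Prop :=
  exists (x : 'I_n -> T) (w : 'I_n -> R),
    [/\ (forall i, 0 <= w i), \sum_(i < n) w i = 1 &
        forall A, measurable A ->
          mu A = (\sum_(i < n) w i * (\1_A (x i) : R))%:E].

Definition is_coupling (R : realType) d1 d2 (T1 : measurableType d1)
  (T2 : measurableType d2) (mu1 : probability T1 R) (mu2 : probability T2 R)
  (pi : probability (T1 * T2)%type R) : Prop :=
  (forall A, measurable A -> pi (A `*` setT) = mu1 A) /\
  (forall B, measurable B -> pi (setT `*` B) = mu2 B).

Definition tsallis_div (R : realType) d (T : measurableType d) (q : R)
  (mu nu : probability T R) : \bar R :=
  if asbool (mu `<< nu) then
    (((q - 1)^-1)%:E *
      \int[nu]_x (let f := fine (('d (charge_of_finite_measure mu) '/d nu) x) in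
                  (f `^ q - f)%:E))%E
  else +oo%E.

Definition phi_q (R : realType) (q x : R) : R := (x `^ (q - 1) - 1) / (q - 1).

(* Main.v *)
Require Import Defs.
From HB Require Import structures.
From mathcomp Require Import all_boot all_order all_algebra.
From mathcomp Require Import all_classical all_reals all_analysis.
Import Order.TTheory GRing.Theory Num.Theory.
Local Open Scope classical_set_scope.
Local Open Scope ring_scope.

From mathcomp Require Import lra measurable_realfun.
Section integral_measure_le.
Local Open Scope ereal_scope.
Context d (T : measurableType d) (R : realType) (mu : {measure set T -> \bar R}).

Lemma integral_measure_le (D : set T) (mD : measurable D) (g f : T -> \bar R) :
  mu.-integrable D f -> mu.-integrable D g ->
  (forall E, E `<=` D -> measurable E ->
    \int[mu]_(x in E) f x <= \int[mu]_(x in E) g x) ->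
  mu (D `&` [set x | g x < f x]) = 0.
Proof.
move=> itf itg fg; pose E j := D `&` [set x | f x - g x >= j.+1%:R^-1%:E].
have msf := measurable_int _ itf.
have msg := measurable_int _ itg.
have mE j : measurable (E j).
  rewrite /E; apply: measurable_lee => //.
  exact: emeasurable_funB.
have muE j : mu (E j) = 0.
  apply/eqP; rewrite -measure_le0.
  have fg0 : \int[mu]_(x in E j) (f \- g) x <= 0.
    rewrite integralB//; last 2 first.
      by apply: integrableS itf => //; exact: subIsetl.
      by apply: integrableS itg => //; exact: subIsetl.
    rewrite sube_le0; apply: fg => //; exact: subIsetl.
  suff : mu (E j) <= j.+1%:R%:E * \int[mu]_(x in E j) (f \- g) x.
    move=> /le_trans; apply.
    by rewrite mule_ge0_le0.
  apply: (@le_trans _ _ (j.+1%:R%:E * \int[mu]_(x in E j) j.+1%:R^-1%:E)).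
    by rewrite integral_cst// muleA -EFinM divff// mul1e.
  rewrite lee_pmul//; first exact: integral_ge0.
  apply: ge0_le_integral => //; last by move=> x [].
  apply: emeasurable_funB.
  - by apply: measurable_funS msf => //; exact: subIsetl.
  - by apply: measurable_funS msg => //; exact: subIsetl.
have nd_E : {homo E : n0 m / (n0 <= m)%N >-> (n0 <= m)%O}.
  move=> i j ij; apply/subsetPset => x [Dx /= ifg]; split => //.
  by move: ifg; apply: le_trans; rewrite lee_fin lef_pV2// ?posrE// ler_nat.
rewrite set_lte_bigcup.
have /cvg_lim h1 : (mu \o E) x @[x --> \oo]--> 0.
  by apply: cvg_near_cst; exact: nearW.
have := @nondecreasing_cvg_mu _ _ _ mu E mE (bigcupT_measurable E mE) nd_E.
by move/cvg_lim => h2; rewrite setI_bigcupr -h2// h1.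
Qed.
End integral_measure_le.
Lemma polish_set1 (R : realType) d (T : measurableType d) :
  polish_measurable R T -> forall y : T, measurable [set y].
Proof.
move=> [dist [[d0 dsym dtri] _ _ mE]] y.
have dge0 a b : 0 <= dist a b.
  have := dtri a b a; rewrite (dsym b a) (proj2 (d0 a a) erefl).
  lra.
have hO : metric_open dist (~` [set y]).
  move=> z /= zy; exists (dist z y).
    rewrite lt_def dge0 andbT; apply/eqP => /d0 h; exact: zy.
  by move=> w hw wy; move: hw; rewrite wy ltxx.
have : measurable (~` [set y]).
  rewrite mE; exact: sub_sigma_algebra.
by move/measurableC; rewrite setCK.
Qed.
Lemma sum_powR_le (R : realType) (n : nat) (w : 'I_n -> R) (p : R) :
  0 <= p -> p < 1 -> (forall i, 0 <= w i) -> \sum_(i < n) w i = 1 ->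
  \sum_(i < n) w i `^ p <= n%:R `^ (1 - p).
Proof.
move=> p0 p1 w0 w1.
have n0 : (0 < n)%N.
  case: n w w0 w1 => // w w0; rewrite big_ord0 => /eqP; rewrite eq_sym oner_eq0.
  by [].
have nR0 : (0 : R) < n%:R by rewrite ltr0n.
have [->|pgt0] := eqVneq p 0.
  under eq_bigr do rewrite powRr0.
  by rewrite subr0 powRr1 ?ler0n// sumr_const card_ord.
have pp : 0 < p by rewrite lt_def pgt0 p0.
have key i : (n%:R * w i) `^ p <= p * (n%:R * w i) + (1 - p).
  have := @conjugate_powR R ((n%:R * w i) `^ p) 1 (p^-1) ((1 - p)^-1).
  rewrite powR_ge0 ler01 invr_gt0 pp invr_gt0 subr_gt0 p1 !invrK addrC subrK.
  move=> /(_ isT isT isT isT erefl).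
  rewrite mulr1 powR1 -powRrM mulfV ?gt_eqF// powRr1 ?mulr_ge0 ?ler0n//.
  by rewrite mul1r [X in _ <= X + _ -> _]mulrC.
have : \sum_(i < n) (n%:R * w i) `^ p <= n%:R.
  apply: le_trans (ler_sum _ (fun i _ => key i)) _.
  rewrite big_split /= -mulr_sumr -mulr_sumr w1 sumr_const card_ord.
  rewrite mulr1 -mulr_natr; lra.
under eq_bigr do rewrite powRM ?ler0n//.
rewrite -mulr_sumr => h.
rewrite powRB ?nR0 ?gt_eqF ?implybT// powRr1 ?ler0n//.
by rewrite ler_pdivlMr ?powR_gt0// mulrC.
Qed.

Lemma ae_of_null d (T : measurableType d) (R : realType)
  (mu : {measure set T -> \bar R}) (N : set T) (P : T -> Prop) :
  measurable N -> mu N = 0%E -> (forall z, ~ N z -> P z) ->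
  \forall z \ae mu, P z.
Proof.
move=> mN N0 hP; exists N; split => // z /= nPz.
by apply: contrapT => /hP.
Qed.

Lemma null_of_ae d (T : measurableType d) (R : realType)
  (mu : {measure set T -> \bar R}) (A : set T) :
  measurable A -> (\forall z \ae mu, ~ A z) -> mu A = 0%E.
Proof.
move=> mA [N [mN N0 sN]]; apply/eqP; rewrite -measure_le0 -N0.
apply: le_measure; rewrite ?inE//.
by move=> z Az; apply: sN => /=; apply.
Qed.

Lemma RN_facts d (T : measurableType d) (R : realType)
  (nu : {finite_measure set T -> \bar R})
  (mu : {sigma_finite_measure set T -> \bar R}) :
  nu `<< mu ->
  [/\ forall z, Radon_Nikodym (charge_of_finite_measure nu) mu z \is a fin_num,
     mu.-integrable setT (Radon_Nikodym (charge_of_finite_measure nu) mu) &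
     forall A, measurable A -> nu A =
       (\int[mu]_(z in A) Radon_Nikodym (charge_of_finite_measure nu) mu z)%E].
Proof.
move=> numu; split.
- by move=> z; apply: Radon_Nikodym_fin_num.
- exact: Radon_Nikodym_integrable.
- by move=> A mA; exact: (@Radon_Nikodym_integral _ _ _ (charge_of_finite_measure nu) mu A numu mA).
Qed.

Lemma integrable_cst_fin d (T : measurableType d) (R : realType)
  (mu : {measure set T -> \bar R}) (k : R) :
  (mu setT < +oo)%E -> mu.-integrable setT (fun _ => k%:E).
Proof.
move=> muT; apply/integrableP; split; first exact: measurable_cst.
rewrite (_ : (fun _ => _) = cst `|k|%:E); last by apply: funext => z.
by rewrite integral_cst // lte_mul_pinfty.
Qed.

Lemma integrable_cst1 d (T : measurableType d) (R : realType)
  (mu : {measure set T -> \bar R}) (k : R) :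
  mu setT = 1%E -> mu.-integrable setT (fun _ => k%:E).
Proof. by move=> h; apply: integrable_cst_fin; rewrite h ltry. Qed.

Lemma eqle d (T : porderType d) (x y : T) : x = y -> (x <= y)%O.
Proof. by move=> ->. Qed.

Theorem lemma2p1 (R : realType) (d1 d2 : measure_display)
  (X1 : measurableType d1) (X2 : measurableType d2)
  (hX1 : polish_measurable R X1) (hX2 : polish_measurable R X2)
  (n : nat) (mu1 : probability X1 R) (mu2 : probability X2 R)
  (hmu2 : supported_on_at_most n mu2)
  (pi : probability (X1 * X2)%type R) (hpi : is_coupling mu1 mu2 pi)
  (q : R) (hq1 : 1 < q) (hq2 : q <= 2) :
  (tsallis_div q pi (mu1 \x mu2) <= (phi_q q n%:R)%:E)%E.
Proof.
have [x [w [w0 w1 mu2E]]] := hmu2.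
have [hpi1 hpi2] := hpi.
have ms1 := @polish_set1 R _ X2 hX2.
pose m (y : X2) : R := \sum_(i < n) w i * (\1_[set x i] y : R).
have m_ge0 y : 0 <= m y.
  by apply: sumr_ge0 => i _; rewrite mulr_ge0 // indicE ler0n.
have mm : measurable_fun setT m.
  apply: measurable_sum => i.
  apply: measurable_realfun.measurable_funM => //.
have ind_sym y y' : (\1_[set y] y' : R) = \1_[set y'] y.
  case: (pselect (y = y')) => [->//|neq].
  by rewrite !indicE !memNset // => /= h; apply: neq.
have mu2m y : mu2 [set y] = (m y)%:E.
  rewrite mu2E //; congr EFin; apply: eq_bigr => i _; by rewrite ind_sym.
have mxi i : w i <= m (x i).
  rewrite /m (bigD1 i) //= indicE mem_set // mulr1 lerDl.
  by apply: sumr_ge0 => j _; rewrite mulr_ge0 // indicE ler0n.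
have mZ : measurable (m @^-1` [set 0]).
  by rewrite -[_ @^-1` _]setTI; apply: mm.
have Z0 : mu2 (m @^-1` [set 0]) = 0%E.
  rewrite mu2E //; congr EFin; apply: big1 => i _.
  have [->|wi0] := eqVneq (w i) 0; first by rewrite mul0r.
  rewrite indicE memNset ?mulr0 //= => mi0.
  have := mxi i; rewrite mi0 => wle. 
  by move/eqP: wi0; apply; apply/le_anti; rewrite wle w0.
have mnz y : m y != 0 -> exists i, y = x i.
  rewrite psumr_neq0; last by move=> i _; rewrite mulr_ge0 // indicE ler0n.
  move=> /hasP[i _ /=]; rewrite indicE.
  by case: (boolP (y \in [set x i])) => [/set_mem -> _|_]; [exists i|rewrite mulr0 ltxx].
have ac : pi `<< (mu1 \x mu2)%E.
  apply/null_content_dominatesP => A mA nuA.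
  apply: null_of_ae => //.
  have h1 : \forall z \ae pi, m z.2 != 0.
    apply: (@ae_of_null _ _ _ _ (setT `*` (m @^-1` [set 0]))).
    - exact: measurableX.
    - exact: (etrans (hpi2 _ mZ) Z0).
    - by move=> z /= nz; apply/eqP => mz; apply: nz.
  have h2 : \forall z \ae pi, forall i, z.2 = x i -> m (x i) != 0 -> ~ A z.
    apply: filter_forall => i.
    have [mi0|mi0] := eqVneq (m (x i)) 0.
      by apply: aeW => z _.
    pose S := ysection A (x i).
    have mS : measurable S := measurable_ysection _ mA.
    have S0 : mu1 S = 0%E.
      have : ((mu1 \x mu2)%E (S `*` [set x i]) = 0)%E.
        apply/eqP; rewrite -measure_le0 -nuA; apply: le_measure; rewrite ?inE //.
          exact: measurableX.
        by move=> [a b] [/= Sa ->]; move: Sa; rewrite /S => /ysectionP.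
      rewrite product_measure1E // => h.
      have {h} : (mu1 S * (m (x i))%:E = 0)%E by rewrite -mu2m; exact: h.
      by move/eqP; rewrite mule_eq0 eqe (negbTE mi0) orbF => /eqP.
    apply: (@ae_of_null _ _ _ _ (S `*` setT)).
    - exact: measurableX.
    - exact: (etrans (hpi1 _ mS) S0).
    move=> [a b] /= nS /= bx _ Aab; apply: nS; split => //=.
    by rewrite /S; apply/ysectionP; rewrite -bx.
  apply: filterS2 h1 h2 => z nz h Az.
  have [i zi] := mnz _ nz.
  by apply: (h i zi _ Az); rewrite -zi.
rewrite /tsallis_div asboolT //.
set F := Radon_Nikodym _ _.
have [Ffin Fint FE] : _ := ltac:(match goal with
  | F := @Radon_Nikodym _ _ _ _ ?M |- _ =>
    exact: (@RN_facts _ _ R pi M ltac:(exact: ac)) end).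
have mF := measurable_int _ Fint.
have g1 : \forall z \ae (mu1 \x mu2)%E, m z.2 != 0.
  apply: (@ae_of_null _ _ _ _ (setT `*` (m @^-1` [set 0]))).
  - exact: measurableX.
  - rewrite [LHS](_ : _ = (mu1 setT * mu2 (m @^-1` [set 0%R]))%E); last first.
      exact: product_measure1E.
    by rewrite Z0 mule0.
  - by move=> z /= nz; apply/eqP => mz; apply: nz.
have g2 : \forall z \ae (mu1 \x mu2)%E, (0 <= F z)%E.
  have h : ((mu1 \x mu2)%E (setT `&` [set z | F z < 0]) = 0)%E.
    apply: (@integral_measure_le _ _ R (mu1 \x mu2)%E setT measurableT F (cst 0%E)).
    - exact: integrable0.
    - exact: Fint.
    - by move=> E _ mE; rewrite integral0 -FE.
  apply: (@ae_of_null _ _ _ _ (setT `&` [set z | F z < 0]%E)) => //.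
    exact: measurable_lte.
  move=> z /= h'; rewrite leNgt; apply/negP => Fz; exact: h'.
have nuT : ((mu1 \x mu2)%E setT = 1)%E.
  rewrite -setXTT [LHS](_ : _ = (mu1 setT * mu2 setT)%E); last first.
    exact: product_measure1E.
  by rewrite !probability_setT mule1.
have g3 : forall i, \forall z \ae (mu1 \x mu2)%E,
    z.2 = x i -> m (x i) != 0 -> (F z <= ((m (x i))^-1)%:E)%E.
  move=> i.
  have [mi0|mi0] := eqVneq (m (x i)) 0; first by apply: aeW => z _.
  pose D := (@setT X1) `*` [set x i].
  have mD : measurable D by apply: measurableX.
  have h : ((mu1 \x mu2)%E (D `&` [set z | ((m (x i))^-1)%:E < F z]) = 0)%E.
    have := (@integral_measure_le _ _ R (mu1 \x mu2)%E D mD (fun=> ((m (x i))^-1)%:E) F).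
    move=> hh; apply: hh.
    - by apply: (integrableS measurableT mD) => //.
    - apply: (integrableS measurableT mD) => //.
      by apply: integrable_cst1; exact: nuT.
    move=> E ED mE.
    pose S := ysection E (x i).
    have mS : measurable S := measurable_ysection _ mE.
    have ES : E = S `*` [set x i].
      apply/seteqP; split => [[a b] Eab | [a b] [Sa /= ->]].
      - have [_ /= bx] := ED _ Eab; split => //=.
        by rewrite /S; apply/ysectionP; rewrite -bx.
      - by move/ysectionP: Sa.
    rewrite -FE // integral_cst //.
    have e1 : ((mu1 \x mu2)%E E = mu1 S * (m (x i))%:E)%E.
      rewrite ES [LHS](_ : _ = (mu1 S * mu2 [set x i])%E); last first.
        exact: product_measure1E.
      by rewrite mu2m.
    apply: (@le_trans _ _ (mu1 S)).
      rewrite -(hpi1 _ mS).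
      apply: le_measure; rewrite ?inE //; first exact: measurableX.
      by rewrite {1}ES => -[a b] [Sa _]; split.
    apply: eqle; symmetry.
    transitivity (((m (x i))^-1)%:E * (mu1 S * (m (x i))%:E))%E.
      by congr (_ * _)%E; exact: e1.
    by rewrite muleCA -EFinM mulVf // mule1.
  apply: (@ae_of_null _ _ _ _ (D `&` [set z | ((m (x i))^-1)%:E < F z]%E)).
  - apply: measurable_lte => //.
    by apply: measurable_funS mF.
  - exact: h.
  - move=> z /= nN zx _; rewrite leNgt; apply/negP => lt; apply: nN; split => //.
pose f z := fine (F z).
have good : \forall z \ae (mu1 \x mu2)%E,
    [/\ 0 < m z.2, 0 <= f z & f z <= (m z.2)^-1].
  have g3' := filter_forall (ae_filter_ringOfSetsType _) g3.
  apply: filterS2 (filterI g1 g2) g3' => z [mz Fz] h3.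
  have [i zi] := mnz _ mz.
  have := h3 i zi; rewrite -zi => /(_ mz) Fle.
  split.
  - by rewrite lt_def mz m_ge0.
  - by rewrite /f fine_ge0.
  - by rewrite /f -lee_fin fineK ?Ffin // zi.
have [N [mN N0 sN]] := good.
have goodN z : ~ N z -> [/\ 0 < m z.2, 0 <= f z & f z <= (m z.2)^-1].
  by move=> nz; apply: contrapT => hz; apply: nz; apply: sN.
have key : (\int[(mu1 \x mu2)%E]_z ((f z `^ q - f z)%:E) <=
    (\sum_(i < n) w i `^ (2 - q) - 1)%:E)%E.
  pose Bf := \sum_(j < n) (m (x j))^-1.
  have fBf z : ~ N z -> f z <= Bf.
    move=> /goodN [mz fz0 fzm]; have [i zi] := mnz _ (lt0r_neq0 mz).
    apply: le_trans fzm _; rewrite zi /Bf (bigD1 i) //= lerDl.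
    by apply: sumr_ge0 => j _; rewrite invr_ge0.
  pose B i := (@setT X1) `*` [set x i].
  have mB i : measurable (B i) by apply: measurableX.
  pose c i := w i * m (x i) `^ (- q).
  have c_ge0 i : 0 <= c i by rewrite mulr_ge0 ?powR_ge0.
  pose G z := \sum_(i < n) c i * (\1_(B i) z : R).
  have G_ge0 z : 0 <= G z.
    by apply: sumr_ge0 => i _; rewrite mulr_ge0 // indicE ler0n.
  pose BG := \sum_(i < n) c i.
  have GBG z : G z <= BG.
    apply: ler_sum => i _; rewrite -[leRHS]mulr1 ler_wpM2l //.
  have mG : measurable_fun setT G.
    apply: measurable_sum => i.
    by apply: measurable_realfun.measurable_funM => //.
  have indB i z : (\1_(B i) z : R) = \1_[set x i] z.2.
    case: (pselect (z.2 = x i)) => [h|ne].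
      by rewrite !indicE !mem_set.
    by rewrite !indicE !memNset // => -[].
  have GE z : m z.2 != 0 -> G z = m z.2 `^ (1 - q).
    move=> mz.
    have -> : G z = m z.2 `^ (- q) * m z.2.
      rewrite /G /m mulr_sumr; apply: eq_bigr => i _.
      rewrite indB /c; case: (pselect (z.2 = x i)) => [<-|ne].
        by rewrite mulrCA mulrA.
      by rewrite !indicE memNset ?mulr0.
    by rewrite addrC powRD ?mz ?implybT // powRr1 ?m_ge0.
  have mf : measurable_fun setT f.
    apply/measurable_realfun.measurable_EFinP.
    rewrite (_ : EFin \o f = F); first exact: mF.
    by apply/funext => z /=; rewrite fineK //; exact: Ffin.
  have mfq : measurable_fun setT (fun z => f z `^ q).
    exact: (measurableT_comp (measurable_realfun.measurable_powR q) mf).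
  have mN' : measurable (~` N) by apply: measurableC.
  have mI : measurable_fun setT (fun z => (\1_(~` N) z : R)).
    exact: measurable_realfun.measurable_indic.
  pose hR z := (f z `^ q - f z) * \1_(~` N) z.
  pose kR z := (f z * G z - f z) * \1_(~` N) z.
  have mhR : measurable_fun setT (fun z => (hR z)%:E).
    apply/measurable_realfun.measurable_EFinP; apply: measurable_realfun.measurable_funM => //.
    exact: measurable_realfun.measurable_funB.
  have mkR : measurable_fun setT (fun z => (kR z)%:E).
    apply/measurable_realfun.measurable_EFinP; apply: measurable_realfun.measurable_funM => //.
    apply: measurable_realfun.measurable_funB => //.
    exact: measurable_realfun.measurable_funM.
  have hk z : ~ N z -> f z `^ q <= f z * G z.
    move=> nz; have [mz fz0 fzm] := goodN z nz.
    rewrite GE ?lt0r_neq0 //.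
    rewrite -(@mulr_powRB1 _ (f z) q) ?(lt_trans ltr01) //.
    apply: ler_wpM2l => //.
    have -> : m z.2 `^ (1 - q) = (m z.2)^-1 `^ (q - 1).
      rewrite -powR_inv1 ?m_ge0 // -powRrM; congr (_ `^ _); lra.
    by apply: ge0_ler_powR; rewrite ?nnegrE ?invr_ge0 ?m_ge0 //; lra.
  have step1 : (\int[(mu1 \x mu2)%E]_z ((f z `^ q - f z)%:E) =
      \int[(mu1 \x mu2)%E]_z (hR z)%:E)%E.
    apply: ae_eq_integral => //.
    - apply/measurable_realfun.measurable_EFinP; exact: measurable_realfun.measurable_funB.
    - apply: (@ae_of_null _ _ _ _ N _ mN N0) => y ny _.
      by rewrite /hR indicE mem_set ?mulr1.
  have Bf0 : 0 <= Bf by apply: sumr_ge0 => j _; rewrite invr_ge0.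
  have BG0 : 0 <= BG by apply: sumr_ge0 => j _.
  have int_hR : (mu1 \x mu2)%E.-integrable setT (fun z => (hR z)%:E).
    apply: (@le_integrable _ _ R (mu1 \x mu2)%E setT measurableT _
      (fun _ => (Bf `^ q + Bf)%:E) mhR).
    - move=> y _; rewrite !abse_EFin lee_fin /hR.
      case: (pselect (N y)) => [ny|ny].
        by rewrite indicE memNset ?mulr0 ?normr0 //= => /(_ ny).
      rewrite indicE mem_set // mulr1.
      have [my fy0 fym] := goodN y ny; have fB := fBf y ny.
      have fqB : f y `^ q <= Bf `^ q.
        by apply: ge0_ler_powR; rewrite ?inE //= ltW // (lt_trans ltr01).
      have := powR_ge0 (f y) q; have := powR_ge0 Bf q => h1 h2.
      rewrite [X in _ <= X]ger0_norm ?addr_ge0 //.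
      rewrite ler_norml; apply/andP; split; lra.
    - by apply: integrable_cst1; exact: nuT.
  have int_kR : (mu1 \x mu2)%E.-integrable setT (fun z => (kR z)%:E).
    apply: (@le_integrable _ _ R (mu1 \x mu2)%E setT measurableT _
      (fun _ => (Bf * BG + Bf)%:E) mkR).
    - move=> y _; rewrite !abse_EFin lee_fin /kR.
      case: (pselect (N y)) => [ny|ny].
        by rewrite indicE memNset ?mulr0 ?normr0 //= => /(_ ny).
      rewrite indicE mem_set // mulr1.
      have [my fy0 fym] := goodN y ny; have fB := fBf y ny.
      have fGB : f y * G y <= Bf * BG by apply: ler_pM.
      have := mulr_ge0 fy0 (G_ge0 y) => h1.
      rewrite [X in _ <= X]ger0_norm ?addr_ge0 ?mulr_ge0 //.
      rewrite ler_norml; apply/andP; split; lra.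
    - by apply: integrable_cst1; exact: nuT.
  have step2 : (\int[(mu1 \x mu2)%E]_z (hR z)%:E <=
      \int[(mu1 \x mu2)%E]_z (kR z)%:E)%E.
    apply: le_integral => // y _; rewrite lee_fin /hR /kR.
    case: (pselect (N y)) => [ny|ny].
      by rewrite indicE memNset ?mulr0 //= => /(_ ny).
    by rewrite indicE mem_set // !mulr1 lerD2r; apply: hk.
  have step3 : (\int[(mu1 \x mu2)%E]_z (kR z)%:E =
      \int[(mu1 \x mu2)%E]_z (f z * G z - f z)%:E)%E.
    apply: ae_eq_integral => //.
    - apply/measurable_EFinP; apply: measurable_funB => //.
      exact: measurable_funM.
    - apply: (@ae_of_null _ _ _ _ N _ mN N0) => y ny _.
      by rewrite /kR indicE mem_set ?mulr1.
  have bndG : [bounded G y | y in setT].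
    exists BG; split; first by rewrite num_real.
    move=> M hM y _ /=; rewrite ger0_norm //; exact: le_trans (GBG y) (ltW hM).
  have intf : (mu1 \x mu2)%E.-integrable setT (fun y => (f y)%:E).
    apply: eq_integrable Fint => // y _.
    by rewrite fineK //; exact: Ffin.
  have intfG : (mu1 \x mu2)%E.-integrable setT (fun y => (f y * G y)%:E).
    have := integrableMl measurableT Fint mG bndG.
    apply: eq_integrable => // y _ /=.
    by rewrite -[in LHS](fineK (Ffin y)) -EFinM.
  have step4 : (\int[(mu1 \x mu2)%E]_y (f y * G y - f y)%:E =
      \int[(mu1 \x mu2)%E]_y (f y * G y)%:E - \int[(mu1 \x mu2)%E]_y (f y)%:E)%E.
    under eq_integral do rewrite EFinB.
    exact: integralB_EFin.
  have I1 : (\int[(mu1 \x mu2)%E]_y (f y)%:E = 1)%E.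
    transitivity (\int[(mu1 \x mu2)%E]_y F y)%E.
      by apply: eq_integral => y _; rewrite fineK //; exact: Ffin.
    rewrite -(probability_setT pi); symmetry; exact: FE.
  have intGpi : pi.-integrable setT (fun y => (G y)%:E).
    apply: (@le_integrable _ _ R pi setT measurableT _ (fun _ => BG%:E)).
    - by apply/measurable_EFinP.
    - move=> y _; rewrite !abse_EFin lee_fin !ger0_norm //.
    - by apply: integrable_cst1; exact: probability_setT.
  have step6 : (\int[(mu1 \x mu2)%E]_y (f y * G y)%:E =
      \int[pi]_y (G y)%:E)%E.
    transitivity (\int[(mu1 \x mu2)%E]_y ((G y)%:E * F y))%E.
      apply: eq_integral => y _.
      by rewrite /f mulrC EFinM fineK //; exact: Ffin.
    match goal with
    | F := @Radon_Nikodym _ _ _ _ ?M |- _ =>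
      exact: (@Radon_Nikodym_change_of_variables _ _ R pi M ltac:(exact: ac)
        (fun y => (G y)%:E) setT measurableT intGpi) end.
  have step7 : (\int[pi]_y (G y)%:E = (\sum_(i < n) c i * m (x i))%:E)%E.
    rewrite /G; under eq_integral do rewrite -sumEFin.
    rewrite ge0_integral_sum //; last first.
      by move=> i y _; rewrite lee_fin mulr_ge0 // indicE ler0n.
      by move=> i; apply/measurable_EFinP; exact: measurable_funM.
    rewrite -sumEFin; apply: eq_bigr => i _.
    under eq_integral do rewrite EFinM.
    rewrite ge0_integralZl_EFin //; last by apply/measurable_EFinP.
    rewrite integral_indic // setIT [RHS]EFinM -mu2m; f_equal.
    exact: hpi2.
  have step8 : \sum_(i < n) c i * m (x i) <= \sum_(i < n) w i `^ (2 - q).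
    apply: ler_sum => i _; rewrite /c.
    have [->|wi0] := eqVneq (w i) 0; first by rewrite !mul0r powR_ge0.
    have wpos : 0 < w i by rewrite lt_def wi0 w0.
    have mpos : 0 < m (x i) := lt_le_trans wpos (mxi i).
    rewrite -mulrA -{2}(powRr1 (ltW mpos)) -powRD; last by rewrite (gt_eqF mpos) implybT.
    have -> : w i `^ (2 - q) = w i * w i `^ (1 - q).
      rewrite -{2}(powRr1 (w0 i)) -powRD; last by rewrite (gt_eqF wpos) implybT.
      congr (_ `^ _); lra.
    rewrite ler_wpM2l // (_ : - q + 1 = - (q - 1)); last lra.
    rewrite (_ : 1 - q = - (q - 1)); last lra.
    rewrite !powRN lef_pV2 ?posrE ?powR_gt0 //.
    by apply: ge0_ler_powR; rewrite ?nnegrE ?w0 ?m_ge0 //; lra.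
  rewrite step1; apply: le_trans step2 _.
  rewrite step3 step4 I1 step6 step7 -EFinB lee_fin lerD2r; exact: step8.
apply: le_trans (lee_wpmul2l _ key) _; first by rewrite lee_fin invr_ge0 subr_ge0 ltW.
rewrite -EFinM lee_fin /phi_q mulrC ler_wpM2r //; first by rewrite invr_ge0 subr_ge0 ltW.
rewrite lerD2r.
have := @sum_powR_le R n w (2 - q) ltac:(lra) ltac:(lra) w0 w1.
by rewrite (_ : 1 - (2 - q) = q - 1) //; lra.
Qed.
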